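(* Let $\nu>-1$ and $p,q\in\mathbb{R}$. Then the inequalities $$(1-p)\mathcal{I}_{\nu+1}(x)+p\frac{\mathcal{I}_{\nu+1}(x)}{\mathcal{I}_{\nu}(x)}>1>(1-q)\mathcal{I}_{\nu+1}(x)+q\frac{\mathcal{I}_{\nu+1}(x)}{\mathcal{I}_{\nu}(x)}$$ hold for all $x\in(0,\infty)$ if and only if $p\leq\frac{\nu+1}{\nu+2}$ and $q\geq 1$.
   Context: For $\mu>-1$, $I_\mu(x)=\sum_{n\geq0}\frac{(x/2)^{\mu+2n}}{n!\,\Gamma(\mu+n+1)}$ is the modified Bessel function of the first kind, and $\mathcal{I}_\mu:\mathbb{R}\to[1,\infty)$ is the normalized modified Bessel function $$\mathcal{I}_{\mu}(x)=2^{\mu}\Gamma(\mu+1)x^{-\mu}I_{\mu}(x)=\sum_{n\geq0}\frac{(1/4)^n}{(\mu+1)_n\, n!}x^{2n},$$ where $(\mu+1)_n=\Gamma(\mu+n+1)/\Gamma(\mu+1)$ is the Pochhammer symbol. In particular $\mathcal{I}_{-1/2}(x)=\cosh x$ and $\mathcal{I}_{1/2}(x)=\frac{\sinh x}{x}$. *)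

(* Defs.v *)
From Stdlib Require Import Reals Lra ClassicalEpsilon Arith Factorial.
Open Scope R_scope.

Fixpoint poch (a : R) (n : nat) : R :=
  match n with
  | O => 1
  | S k => poch a k * (a + INR k)
  end.

(* n-th term of the series of the normalized modified Bessel function *)
Definition Inorm_term (mu x : R) (n : nat) : R :=
  (/ 4) ^ n / (poch (mu + 1) n * INR (fact n)) * x ^ (2 * n).

Definition Inorm (mu x : R) : R :=
  epsilon (inhabits 0) (fun l => infinite_sum (Inorm_term mu x) l).

(* Main.v *)
Require Import Defs.
From Stdlib Require Import Reals Lra Lia ClassicalEpsilon FunctionalExtensionality Arith Factorial ZArith.
Open Scope R_scope.

Definition vt (c t : R) (n : nat) : R := t ^ n / (poch c n * INR (fact n)).

Lemma poch_pos c n : 0 < c -> 0 < poch c n.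
Proof. intro Hc; induction n; simpl; [lra|]. apply Rmult_lt_0_compat; auto.
  pose proof (pos_INR n); lra. Qed.

Lemma poch_S' c n : poch c (S n) = c * poch (c + 1) n.
Proof. induction n.
  - simpl; ring.
  - change (poch c (S (S n))) with (poch c (S n) * (c + INR (S n))).
    rewrite IHn. simpl poch. rewrite S_INR. destruct n; simpl; ring. Qed.

Lemma term_eq mu x n : Inorm_term mu x n = vt (mu + 1) (x ^ 2 / 4) n.
Proof. unfold Inorm_term, vt. rewrite pow_mult. unfold Rdiv.
  rewrite Rpow_mult_distr. ring. Qed.

Lemma vt_pos c t n : 0 < c -> 0 < t -> 0 < vt c t n.
Proof. intros; unfold vt. apply Rdiv_lt_0_compat. apply pow_lt; auto.
  apply Rmult_lt_0_compat. apply poch_pos; auto. apply INR_fact_lt_0. Qed.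

Lemma vt_ratio c t n : 0 < c -> 0 < t ->
  vt c t (S n) / vt c t n = t / ((c + INR n) * (INR n + 1)).
Proof. intros Hc Ht. unfold vt. simpl poch. rewrite fact_simpl, mult_INR, S_INR.
  pose proof (poch_pos c n Hc). pose proof (INR_fact_lt_0 n). pose proof (pos_INR n).
  pose proof (pow_lt t n Ht). simpl. field. repeat split; lra. Qed.

Lemma vt_sum c t : 0 < c -> 0 < t -> exists l, infinite_sum (vt c t) l.
Proof. intros Hc Ht.
  assert (H : Un_cv (fun n => Rabs (vt c t (S n) / vt c t n)) 0).
  { intros eps Heps.
    destruct (archimed (t / (c * eps))) as [H1 _].
    assert (Hp : 0 < t / (c*eps)) by (apply Rdiv_lt_0_compat; nra).
    assert (Hz : (0 < up (t / (c*eps)))%Z) by (apply lt_IZR; lra).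
    exists (Z.to_nat (up (t / (c * eps)))). intros n Hn.
    unfold Rdist. rewrite vt_ratio by auto. rewrite Rminus_0_r, Rabs_Rabsolu.
    apply le_INR in Hn. rewrite INR_IZR_INZ, Z2Nat.id in Hn by lia.
    pose proof (pos_INR n).
    assert (Hd : 0 < (c + INR n) * (INR n + 1)) by nra.
    rewrite Rabs_right by (apply Rle_ge, Rlt_le, Rdiv_lt_0_compat; lra).
    apply Rmult_lt_reg_r with ((c + INR n) * (INR n + 1)); auto.
    unfold Rdiv; rewrite Rmult_assoc, Rinv_l by lra. rewrite Rmult_1_r.
    assert (t < c * eps * INR n).
    { assert (t / (c*eps) < INR n) by lra.
      apply Rmult_lt_compat_l with (r := c*eps) in H0; [|nra].
      unfold Rdiv in H0. rewrite <- Rmult_assoc, (Rmult_comm (c*eps) t), Rmult_assoc, Rinv_r in H0 by nra. lra. }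
    nra. }
  destruct (Alembert_C3 (vt c t) 1 (fun n => Rgt_not_eq _ _ (vt_pos c t n Hc Ht)) H) as [l Hl].
  exists l. unfold Pser in Hl. intros eps He. destruct (Hl eps He) as [N HN]. exists N.
  intros n Hn. specialize (HN n Hn).
  rewrite (sum_eq _ (vt c t)) in HN; auto. intros; rewrite pow1; ring. Qed.

Lemma Inorm_eq mu x : -1 < mu -> 0 < x -> infinite_sum (vt (mu + 1) (x ^ 2 / 4)) (Inorm mu x).
Proof. intros Hm Hx. unfold Inorm.
  replace (Inorm_term mu x) with (vt (mu + 1) (x ^ 2 / 4)) by (extensionality n; now rewrite term_eq).
  apply epsilon_spec. apply vt_sum. lra. nra. Qed.

Lemma cv_const (k : R) : Un_cv (fun _ => k) k.
Proof. intros eps He; exists O; intros; unfold Rdist; rewrite Rminus_diag, Rabs_R0; lra. Qed.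

Lemma sum_lin a b A B al be : infinite_sum a A -> infinite_sum b B ->
  infinite_sum (fun n => al * a n + be * b n) (al * A + be * B).
Proof. intros Ha Hb.
  assert (H : Un_cv (fun n => al * sum_f_R0 a n + be * sum_f_R0 b n) (al * A + be * B)).
  { apply CV_plus; apply CV_mult; try apply cv_const; assumption. }
  intros eps He; destruct (H eps He) as [N HN]; exists N; intros n Hn.
  replace (sum_f_R0 (fun n => al * a n + be * b n) n) with (al * sum_f_R0 a n + be * sum_f_R0 b n).
  apply HN; auto. clear; induction n; simpl; [ring| rewrite <- IHn; ring]. Qed.

Lemma sum_shift a A : infinite_sum a A ->
  infinite_sum (fun n => match n with O => 0 | S k => a k end) A.
Proof. intros Ha eps He. destruct (Ha eps He) as [N HN]. exists (S N). intros n Hn.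
  destruct n as [|n]; [lia|].
  replace (sum_f_R0 (fun n => match n with O => 0 | S k => a k end) (S n)) with (sum_f_R0 a n).
  apply HN; lia. clear; induction n; simpl; [ring| simpl in IHn; rewrite <- IHn; ring]. Qed.

Lemma sum_ge_partial a A N : infinite_sum a A -> (forall n, (N < n)%nat -> 0 <= a n) ->
  sum_f_R0 a N <= A.
Proof. intros Ha Hp. destruct (Rle_or_lt (sum_f_R0 a N) A) as [h|h]; auto.
  destruct (Ha (sum_f_R0 a N - A)) as [M HM]; [lra|].
  specialize (HM (max N M) (Nat.le_max_r _ _)).
  assert (forall k, sum_f_R0 a N <= sum_f_R0 a (N + k)).
  { induction k. rewrite Nat.add_0_r; lra. rewrite Nat.add_succ_r. simpl.
    pose proof (Hp (S (N + k)) ltac:(lia)). lra. }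
  specialize (H (max N M - N)%nat). replace (N + (max N M - N))%nat with (max N M) in H by lia.
  unfold Rdist in HM. apply Rabs_def2 in HM. lra. Qed.

Lemma sum_ext a b A : (forall n, a n = b n) -> infinite_sum a A -> infinite_sum b A.
Proof. intros H; replace b with a; auto. extensionality n; auto. Qed.

Lemma sum_scal a A k : infinite_sum a A -> infinite_sum (fun n => k * a n) (k * A).
Proof. intro H. pose proof (sum_lin a a A A k 0 H H).
  replace (k * A) with (k * A + 0 * A) by ring. eapply sum_ext; [|exact H0]. intro n; simpl; ring. Qed.

Lemma u_eq c t n : 0 < c -> vt (c + 1) t n = c * vt c t n / (c + INR n).
Proof. intro Hc. unfold vt.
  assert (E : poch c n * (c + INR n) = c * poch (c+1) n) by (rewrite <- poch_S'; reflexivity).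
  pose proof (poch_pos c n Hc). pose proof (poch_pos (c+1) n ltac:(lra)).
  pose proof (INR_fact_lt_0 n). pose proof (pos_INR n).
  assert (poch (c+1) n = poch c n * (c + INR n) / c) by (rewrite E; field; lra).
  rewrite H3. field. repeat split; lra. Qed.

Lemma w_eq c t k : 0 < c -> INR (S k) * vt c t (S k) = t / c * vt (c + 1) t k.
Proof. intro Hc. unfold vt. rewrite poch_S', fact_simpl, mult_INR.
  pose proof (poch_pos (c+1) k ltac:(lra)). pose proof (INR_fact_lt_0 k).
  pose proof (pos_INR k). rewrite S_INR. simpl. field. repeat split; lra. Qed.

Section Facts.
Variables (c t G F : R).
Hypothesis (Hc : 0 < c) (Ht : 0 < t).
Hypothesis (HG : infinite_sum (vt c t) G) (HF : infinite_sum (vt (c + 1) t) F).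

Lemma vt0 : vt c t 0 = 1. Proof. unfold vt; simpl; field. Qed.
Lemma vt1 : vt c t 1 = t / c. Proof. unfold vt; simpl; field; lra. Qed.

Lemma fact_G_lb : 1 + t / c <= G.
Proof. pose proof (sum_ge_partial _ _ 1 HG (fun n _ => Rlt_le _ _ (vt_pos c t n Hc Ht))).
  simpl in H. rewrite vt0, vt1 in H. lra. Qed.

Lemma fact_FG : F < G.
Proof. pose proof (sum_lin _ _ _ _ 1 (-1) HG HF).
  assert (Hn : forall n, 0 <= 1 * vt c t n + -1 * vt (c + 1) t n).
  { intro n. rewrite u_eq by auto. pose proof (vt_pos c t n Hc Ht). pose proof (pos_INR n).
    replace (1 * vt c t n + -1 * (c * vt c t n / (c + INR n))) with (vt c t n * INR n / (c + INR n)) by (field; lra).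
    apply Rmult_le_pos; [nra|]. apply Rlt_le, Rinv_0_lt_compat; lra. }
  pose proof (sum_ge_partial _ _ 1 H (fun n _ => Hn n)). simpl in H0.
  rewrite !u_eq in H0 by auto. rewrite vt0, vt1 in H0. simpl in H0.
  assert (t / c - c * (t / c) / (c + 1) > 0).
  { replace (t / c - c * (t / c) / (c + 1)) with (t / (c * (c+1))) by (field; lra).
    apply Rdiv_lt_0_compat; nra. }
  replace (c * 1 / (c + 0)) with 1 in H0 by (field; lra). lra. Qed.

Lemma fact_key : t / c * F + (c + 1) * F - c * G > 1 + t / c.
Proof.
  pose proof (sum_shift _ _ (sum_scal _ _ (t / c) HF)) as HW.
  pose proof (sum_lin _ _ _ _ 1 (c + 1) HW HF) as H1.
  pose proof (sum_lin _ _ _ _ 1 (- c) H1 HG) as H2.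
  set (T := fun n => vt c t n * (INR n ^ 2 + c) / (c + INR n)).
  assert (HT : forall n, 1 * (1 * (match n with O => 0 | S k => t / c * vt (c + 1) t k end) + (c + 1) * vt (c + 1) t n) + - c * vt c t n = T n).
  { intro n. unfold T. rewrite u_eq by auto. pose proof (pos_INR n).
    destruct n as [|k].
    - simpl. field. lra.
    - rewrite <- w_eq by auto. field. lra. }
  apply (sum_ext _ _ _ HT) in H2.
  assert (Hn : forall n, 0 <= T n).
  { intro n; unfold T. pose proof (vt_pos c t n Hc Ht). pose proof (pos_INR n).
    apply Rmult_le_pos; [nra|]. apply Rlt_le, Rinv_0_lt_compat; lra. }
  pose proof (sum_ge_partial _ _ 2 H2 (fun n _ => Hn n)).
  simpl in H. unfold T in H. simpl in H. rewrite vt0, vt1 in H.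
  pose proof (vt_pos c t 2 Hc Ht).
  assert (0 < vt c t 2 * ((1 + 1) * ((1 + 1) * 1) + c) / (c + (1 + 1))).
  { apply Rdiv_lt_0_compat; nra. }
  replace (1 * (0 * (0 * 1) + c) / (c + 0) + t / c * (1 * (1 * 1) + c) / (c + 1)) with (1 + t / c) in H by (field; lra).
  lra. Qed.

Lemma fact_ub G1 : t <= 1 -> infinite_sum (vt c 1) G1 -> G <= 1 + t / c + t ^ 2 * G1.
Proof. intros Ht1 HG1.
  pose proof (sum_lin _ _ _ _ (t ^ 2) (-1) HG1 HG) as H.
  assert (Hn : forall n, (1 < n)%nat -> 0 <= t ^ 2 * vt c 1 n + -1 * vt c t n).
  { intros n Hn. replace n with (2 + (n - 2))%nat by lia. unfold vt.
    rewrite pow1, pow_add.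
    pose proof (poch_pos c (2 + (n - 2)) Hc). pose proof (INR_fact_lt_0 (2 + (n - 2))).
    assert (t ^ (n - 2) <= 1) by (rewrite <- (pow1 (n - 2)); apply pow_incr; lra).
    assert (0 < t ^ 2) by (apply pow_lt; lra).
    set (D := poch c (2 + (n - 2)) * INR (fact (2 + (n - 2)))) in *.
    assert (0 < D) by (unfold D; nra).
    replace (t ^ 2 * (1 / D) + -1 * (t ^ 2 * t ^ (n - 2) / D)) with (t ^ 2 * (1 - t ^ (n - 2)) / D) by (field; lra).
    apply Rmult_le_pos; [nra|]. apply Rlt_le, Rinv_0_lt_compat; lra. }
  pose proof (sum_ge_partial _ _ 1 H Hn). simpl in H0. rewrite vt0, vt1 in H0.
  unfold vt in H0; simpl in H0.
  assert (0 <= t ^ 2 * (1 + 1 / c)).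
  { apply Rmult_le_pos. apply pow_le; lra. assert (0 < 1 / c) by (apply Rdiv_lt_0_compat; lra). lra. }
  replace (t * (t * 1) * (1 / (1 * 1)) + -1 * 1 + (t * (t * 1) * (1 * 1 / (1 * (c + 0) * 1)) + -1 * (t / c)))
    with (t ^ 2 * (1 + 1 / c) - 1 - t / c) in H0 by (simpl; field; lra).
  replace (t * (t * 1)) with (t ^ 2) in H0 by ring.
  lra. Qed.

End Facts.

Lemma alg_suff c t f g p q : 0 < c -> 0 < t -> 1 < f -> f < g -> t / c <= g - 1 ->
  t / c * f + (c + 1) * f - c * g > 1 + t / c -> p <= c / (c + 1) -> q >= 1 ->
  (1 - p) * f + p * (f / g) > 1 /\ 1 > (1 - q) * f + q * (f / g).
Proof. intros Hc Ht Hf Hg Hb Hk Hp Hq.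
  set (s := f * (g - 1) / g).
  assert (Hs : 0 < s) by (unfold s; apply Rdiv_lt_0_compat; nra).
  assert (E : forall r, (1 - r) * f + r * (f / g) = f - r * s) by (intro; unfold s; field; lra).
  rewrite !E.
  assert (Hab : (f - 1) * (g - 1) >= (f - 1) * (t / c)) by nra.
  assert (HK : (c + 1) * (f - 1) - c * (g - 1) + (f - 1) * (g - 1) > 0).
  { assert (t / c * (f - 1) + (c + 1) * (f - 1) - c * (g - 1) > 0) by lra. nra. }
  split.
  - assert (f - c / (c + 1) * s - 1 = ((c + 1) * (f - 1) - c * (g - 1) + (f - 1) * (g - 1)) / ((c + 1) * g))
      by (unfold s; field; lra).
    assert (0 < ((c + 1) * (f - 1) - c * (g - 1) + (f - 1) * (g - 1)) / ((c + 1) * g))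
      by (apply Rdiv_lt_0_compat; nra).
    nra.
  - assert (f - s = f / g) by (unfold s; field; lra).
    assert (f / g < 1) by (apply (Rmult_lt_reg_r g); [lra|]; unfold Rdiv; rewrite Rmult_assoc, Rinv_l; lra).
    nra. Qed.

Lemma alg_p c t f g p F1 G1 : 0 < c -> 0 < t -> t <= 1 -> 0 <= F1 -> 0 <= G1 ->
  1 <= f -> f <= 1 + t / (c + 1) + t ^ 2 * F1 ->
  1 + t / c <= g -> g <= 1 + t / c + t ^ 2 * G1 ->
  t * (F1 * (1 + 1 / c + G1) + (1 / c + G1) / (c + 1)) <= p / c - 1 / (c + 1) ->
  (1 - p) * f + p * (f / g) <= 1.
Proof. intros Hc Ht Ht1 HF1 HG1 Hf1 Hf2 Hg1 Hg2 HM.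
  assert (Hc1 : 0 < 1 / c) by (apply Rdiv_lt_0_compat; lra).
  assert (Hc2 : 0 < 1 / (c + 1)) by (apply Rdiv_lt_0_compat; lra).
  assert (Htc : t / c = t * (1 / c)) by (unfold Rdiv; ring).
  assert (Htc1 : t / (c + 1) = t * (1 / (c + 1))) by (unfold Rdiv; ring).
  assert (Hp : 0 < p).
  { assert (0 <= t * (F1 * (1 + 1 / c + G1) + (1 / c + G1) / (c + 1))).
    { apply Rmult_le_pos; [lra|]. apply Rplus_le_le_0_compat. apply Rmult_le_pos; lra.
      apply Rmult_le_pos; [lra| apply Rlt_le, Rinv_0_lt_compat; lra]. }
    assert (1 / (c + 1) <= p / c) by lra.
    assert (p / c = p * (1 / c)) by (unfold Rdiv; ring). nra. }
  set (A := t / (c + 1) + t ^ 2 * F1). set (B := 1 + t / c + t ^ 2 * G1).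
  assert (H1 : (f - 1) * g <= A * B).
  { assert (0 <= t / c) by (apply Rlt_le, Rdiv_lt_0_compat; lra). apply Rmult_le_compat; unfold A, B; lra. }
  assert (H2 : A * B <= t * (1 / (c + 1) + t * (F1 * (1 + 1 / c + G1) + (1 / c + G1) / (c + 1)))).
  { unfold A, B. rewrite Htc, Htc1.
    assert (E : (t * (1 / (c + 1)) + t ^ 2 * F1) * (1 + t * (1 / c) + t ^ 2 * G1)
       = t * (1 / (c + 1) + t * (F1 * (1 + t * (1 / c) + t ^ 2 * G1) + (1 / c + t * G1) * (1 / (c + 1))))) by ring.
    rewrite E. apply Rmult_le_compat_l; [lra|]. apply Rplus_le_compat_l.
    apply Rmult_le_compat_l; [lra|].
    replace ((1 / c + G1) / (c + 1)) with ((1 / c + G1) * (1 / (c + 1))) by (field; lra).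
    assert (t * G1 <= G1) by nra. assert (t ^ 2 * G1 <= G1) by (simpl; nra).
    assert (t * (1 / c) <= 1 / c) by nra.
    apply Rplus_le_compat. apply Rmult_le_compat_l; lra.
    apply Rmult_le_compat_r; lra. }
  assert (H3 : (f - 1) * g <= t * (p / c)) by nra.
  assert (H4 : t * (p / c) <= p * f * (g - 1)).
  { assert (t * (p / c) = p * (t / c)) by (unfold Rdiv; ring). rewrite H. assert (0 <= t / c) by (apply Rlt_le, Rdiv_lt_0_compat; lra). assert (p * (t / c) <= p * (g - 1)) by (apply Rmult_le_compat_l; lra). assert (0 <= p * ((g - 1) * (f - 1))) by (apply Rmult_le_pos; [lra|apply Rmult_le_pos; lra]). assert (p * (g - 1) <= p * f * (g - 1)) by nra. lra. }
  assert (0 <= t / c) by (apply Rlt_le, Rdiv_lt_0_compat; lra).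
  assert (E : (1 - p) * f + p * (f / g) - 1 = ((f - 1) * g - p * f * (g - 1)) / g) by (field; lra).
  assert (((f - 1) * g - p * f * (g - 1)) / g <= 0).
  { unfold Rdiv. assert (0 < / g) by (apply Rinv_0_lt_compat; lra). nra. }
  lra. Qed.

Lemma alg_q f g q : q < 1 -> 1 + 1 / (1 - q) <= f -> f < g ->
  1 <= (1 - q) * f + q * (f / g).
Proof. intros Hq Hf Hg.
  assert (H0 : 0 < 1 / (1 - q)) by (apply Rdiv_lt_0_compat; lra).
  assert (Hfg : 0 < f / g) by (apply Rdiv_lt_0_compat; lra).
  destruct (Rle_or_lt q 0) as [h|h].
  - assert (f / g < 1) by (apply (Rmult_lt_reg_r g); [lra|]; unfold Rdiv; rewrite Rmult_assoc, Rinv_l; lra).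
    nra.
  - assert ((1 - q) * (1 / (1 - q)) = 1) by (field; lra). nra. Qed.

Lemma pt_facts nu x : -1 < nu -> 0 < x ->
  let c := nu + 1 in let t := x ^ 2 / 4 in
  1 + t / (c + 1) <= Inorm (nu + 1) x /\ 1 + t / c <= Inorm nu x /\
  Inorm (nu + 1) x < Inorm nu x /\
  t / c * Inorm (nu + 1) x + (c + 1) * Inorm (nu + 1) x - c * Inorm nu x > 1 + t / c.
Proof. intros Hnu Hx c t.
  assert (Hc : 0 < c) by (unfold c; lra).
  assert (Ht : 0 < t) by (unfold t; apply Rdiv_lt_0_compat; [apply pow_lt|]; lra).
  pose proof (Inorm_eq nu x Hnu Hx) as HG. pose proof (Inorm_eq (nu + 1) x ltac:(lra) Hx) as HF.
  fold c t in HG, HF.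
  split; [exact (fact_G_lb (c + 1) t _ ltac:(lra) Ht HF)|].
  split; [exact (fact_G_lb c t _ Hc Ht HG)|].
  split; [exact (fact_FG c t _ _ Hc Ht HG HF)|].
  exact (fact_key c t _ _ Hc Ht HG HF). Qed.

Lemma t_pos c t : 0 < c -> 0 <= t -> 0 <= t / c.
Proof. intros; unfold Rdiv; apply Rmult_le_pos; [lra|apply Rlt_le, Rinv_0_lt_compat; lra]. Qed.

Theorem theorem4p1 (nu p q : R) (hnu : -1 < nu) :
  (forall x : R, 0 < x ->
     (1 - p) * Inorm (nu + 1) x + p * (Inorm (nu + 1) x / Inorm nu x) > 1 /\
     1 > (1 - q) * Inorm (nu + 1) x + q * (Inorm (nu + 1) x / Inorm nu x))
  <-> (p <= (nu + 1) / (nu + 2) /\ q >= 1).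
Proof.
  assert (Hc : 0 < nu + 1) by lra.
  replace (nu + 2) with (nu + 1 + 1) by ring.
  split.
  - intro H. split.
    + destruct (Rle_or_lt p ((nu + 1) / (nu + 1 + 1))) as [h|hp]; auto. exfalso.
      set (c := nu + 1) in *.
      assert (HG1 : infinite_sum (vt c 1) (Inorm nu 2)).
      { pose proof (Inorm_eq nu 2 hnu ltac:(lra)). replace (2 ^ 2 / 4) with 1 in H0 by field. exact H0. }
      assert (HF1 : infinite_sum (vt (c + 1) 1) (Inorm (nu + 1) 2)).
      { pose proof (Inorm_eq (nu + 1) 2 ltac:(lra) ltac:(lra)). replace (2 ^ 2 / 4) with 1 in H0 by field. exact H0. }
      set (F1 := Inorm (nu + 1) 2) in *. set (G1 := Inorm nu 2) in *.
      assert (HF1p : 0 <= F1).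
      { pose proof (fact_G_lb (c + 1) 1 F1 ltac:(lra) ltac:(lra) HF1). pose proof (t_pos (c + 1) 1 ltac:(lra) ltac:(lra)). lra. }
      assert (HG1p : 0 <= G1).
      { pose proof (fact_G_lb c 1 G1 ltac:(lra) ltac:(lra) HG1). pose proof (t_pos c 1 ltac:(lra) ltac:(lra)). lra. }
      set (d := p / c - 1 / (c + 1)).
      assert (Hd : 0 < d).
      { unfold d. replace (p / c - 1 / (c + 1)) with ((p * (c + 1) - c) / (c * (c + 1))) by (field; lra).
        apply Rdiv_lt_0_compat; [|nra].
        assert (c / (c + 1) * (c + 1) = c) by (field; lra). nra. }
      set (M := F1 * (1 + 1 / c + G1) + (1 / c + G1) / (c + 1)).
      assert (HM : 0 <= M).
      { unfold M. pose proof (t_pos c 1 ltac:(lra) ltac:(lra)). pose proof (t_pos (c + 1) (1 / c + G1) ltac:(lra) ltac:(lra)).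
        assert (0 <= F1 * (1 + 1 / c + G1)) by (apply Rmult_le_pos; lra). lra. }
      set (s := Rmin 1 (d / (M + 1))).
      assert (Hs0 : 0 < s) by (unfold s; apply Rmin_glb_lt; [lra| apply Rdiv_lt_0_compat; lra]).
      assert (Hs1 : s <= 1) by apply Rmin_l.
      assert (Hs2 : s <= d / (M + 1)) by apply Rmin_r.
      assert (HsM : s * M <= d).
      { assert (s * (M + 1) <= d).
        { replace d with (d / (M + 1) * (M + 1)) by (field; lra). apply Rmult_le_compat_r; lra. }
        nra. }
      set (x := 2 * s).
      assert (Hx : 0 < x) by (unfold x; lra).
      assert (Htx : x ^ 2 / 4 = s ^ 2) by (unfold x; field).
      destruct (pt_facts nu x hnu Hx) as [Hf [Hg [Hfg Hk]]]. fold c in Hf, Hg, Hfg, Hk.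
      rewrite Htx in Hf, Hg, Hk.
      assert (Hts : s ^ 2 <= s) by (simpl; nra).
      assert (Ht0 : 0 < s ^ 2) by (apply pow_lt; lra).
      pose proof (Inorm_eq nu x hnu Hx) as HG. pose proof (Inorm_eq (nu + 1) x ltac:(lra) Hx) as HF.
      fold c in HG, HF. rewrite Htx in HG, HF.
      pose proof (fact_ub c (s ^ 2) _ ltac:(lra) Ht0 HG G1 ltac:(lra) HG1) as Hgu.
      pose proof (fact_ub (c + 1) (s ^ 2) _ ltac:(lra) Ht0 HF F1 ltac:(lra) HF1) as Hfu.
      pose proof (t_pos (c + 1) (s ^ 2) ltac:(lra) ltac:(lra)) as Htp.
      assert (HsM2 : s ^ 2 * M <= d) by nra.
      pose proof (alg_p c (s ^ 2) (Inorm c x) (Inorm nu x) p F1 G1 ltac:(lra) Ht0 ltac:(lra) HF1p HG1p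
        ltac:(lra) Hfu Hg Hgu HsM2).
      destruct (H x Hx). lra.
    + destruct (Rle_or_lt 1 q) as [h|hq]; [lra|]. exfalso.
      set (c := nu + 1) in *.
      set (K := (c + 1) / (1 - q)).
      assert (HK : 0 < K) by (unfold K; apply Rdiv_lt_0_compat; lra).
      set (x := 2 * (1 + K)).
      assert (Hx : 0 < x) by (unfold x; lra).
      destruct (pt_facts nu x hnu Hx) as [Hf [Hg [Hfg Hk]]]. fold c in Hf, Hg, Hfg, Hk.
      assert (Htx : x ^ 2 / 4 = (1 + K) ^ 2) by (unfold x; field).
      rewrite Htx in Hf.
      assert (K / (c + 1) <= (1 + K) ^ 2 / (c + 1)).
      { unfold Rdiv. apply Rmult_le_compat_r. apply Rlt_le, Rinv_0_lt_compat; lra. simpl; nra. }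
      assert (K / (c + 1) = 1 / (1 - q)) by (unfold K; field; lra).
      pose proof (alg_q (Inorm c x) (Inorm nu x) q hq ltac:(lra) Hfg).
      destruct (H x Hx). lra.
  - intros [Hp Hq] x Hx.
    destruct (pt_facts nu x hnu Hx) as [Hf [Hg [Hfg Hk]]].
    set (c := nu + 1) in *. set (t := x ^ 2 / 4) in *.
    assert (Ht : 0 < t) by (unfold t; apply Rdiv_lt_0_compat; [apply pow_lt|]; lra).
    pose proof (t_pos (c + 1) t ltac:(lra) ltac:(lra)). pose proof (t_pos c t ltac:(lra) ltac:(lra)).
    assert (0 < t / (c + 1)) by (apply Rdiv_lt_0_compat; lra).
    apply (alg_suff c t); auto; lra. Qed.
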